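(* Let $G$ be a finite undirected graph, $\tau\ge1$ an odd integer, and $e=(u,v)\in E(G)$. Then $\phi_\tau(e,G)\ge|V(\Omega(e))|$.
   Context: Graphs are finite, simple, undirected and unweighted; paths may repeat vertices and their length is the number of edges. For vertices $v,u$ of a graph $H$, $u$ is $t$-hop reachable from $v$ in $H$ (written $u\rightarrow_t v$) if there is a path between them in $H$ of length at most $t$. $N_t(v,H)$ is the set of vertices $u\ne v$ that are $t$-hop reachable from $v$ in $H$. For an edge $e=(u,v)$ of $H$, $\Delta_t(e,H)=N_t(u,H)\cap N_t(v,H)$ and $\mathrm{sup}_t(e,H)=|\Delta_t(e,H)|$. The $(k,\tau)$-truss of $G$ is the maximal subgraph $G'$ of $G$ such that $\mathrm{sup}_\tau(e,G')\ge k-2$ for every $e\in E(G')$ (supports computed inside $G'$) and no more edges of $G$ can be added while keeping this property. The higher-order truss number $\phi_\tau(e,G)$ is the maximum $k$ such that $e$ belongs to the $(k,\tau)$-truss of $G$. For odd $\tau$ and an edge $e=(u,v)$, the edge centric $\tau$-diameter subgraph $\Omega(e)$ is the subgraph of $G$ induced by $\{u\}\cup\{v\}\cup\{w : w\rightarrow_{\lfloor\tau/2\rfloor} u \text{ or } w\rightarrow_{\lfloor\tau/2\rfloor} v \text{ in } G\}$. *)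

(* Defs.v *)
(* Finite simple undirected graphs on a finType T, given by
   their edge set E : {set {set T}} (each edge is a 2-element set {x, y}).
   The vertex set of G is the whole type T. *)
From mathcomp Require Import all_boot.
Set Implicit Arguments. Unset Strict Implicit. Unset Printing Implicit Defensive.

Section Defs.
Variable T : finType.
Implicit Types (E F : {set {set T}}) (x y z : T).

Definition simple_graph E := forall e, e \in E -> #|e| = 2.

Definition adj E x y : bool := (x != y) && ([set x; y] \in E).

Fixpoint reach E (t : nat) x y : bool :=
  if t is t'.+1 then reach E t' x y || [exists z, reach E t' x z && adj E z y]
  else x == y.

Definition nbhd E t x : {set T} := [set w | (w != x) && reach E t x w].

Definition sup E t x y : nat := #|nbhd E t x :&: nbhd E t y|.

Definition truss_prop k t F : bool :=
  [forall e in F, forall x, forall y,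
     ((e == [set x; y]) && (x != y)) ==> (k <= sup F t x y + 2)].

Definition is_truss k t E F : bool :=
  (F \subset E) && truss_prop k t F &&
  [forall F' : {set {set T}},
     ((F \subset F') && (F' \subset E) && truss_prop k t F') ==> (F' == F)].

Definition in_truss k t E e : bool :=
  [exists F : {set {set T}}, is_truss k t E F && (e \in F)].

(* higher-order truss number phi_t(e, G): the maximum k such that e lies in
   the (k,t)-truss.  Supports are at most #|T|, so every such k is < #|T|+3;
   the bound only makes the maximum range finite. *)
Definition truss_number t E e : nat :=
  \max_(k < #|T|.+3 | in_truss k t E e) k.

Definition omega_vertices E t u v : {set T} :=
  [set w | (w == u) || (w == v) || reach E t./2 u w || reach E t./2 v w].

End Defs.

(* Main.v *)
Require Import Defs.
From mathcomp Require Import all_boot.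
Set Implicit Arguments. Unset Strict Implicit. Unset Printing Implicit Defensive.

Section Aux.
Variable T : finType.
Implicit Types (E F : {set {set T}}) (x y z : T).

Lemma adj_mono E F x y : E \subset F -> adj E x y -> adj F x y.
Proof. by move=> sEF /andP[xy /(subsetP sEF) h]; rewrite /adj xy h. Qed.

Lemma adj_sym E x y : adj E x y -> adj E y x.
Proof. by rewrite /adj eq_sym setUC. Qed.

Lemma reach_mono E F t x y : E \subset F -> reach E t x y -> reach F t x y.
Proof.
move=> sEF; elim: t y => [|t IH] y //=.
case/orP=> [/IH -> //|/existsP[z /andP[/IH r a]]].
apply/orP; right; apply/existsP; exists z; rewrite r.
exact: adj_mono a.
Qed.

Lemma reach_S E t x y : reach E t x y -> reach E t.+1 x y.
Proof. by move=> r /=; rewrite r. Qed.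

Lemma reach_le E t t' x y : t <= t' -> reach E t x y -> reach E t' x y.
Proof.
move=> le; elim: t' le => [|t' IH]; first by rewrite leqn0 => /eqP ->.
rewrite leq_eqVlt => /orP[/eqP -> //|lt] r.
exact/reach_S/IH.
Qed.

Lemma reach_trans E a b x y z :
  reach E a x y -> reach E b y z -> reach E (a + b) x z.
Proof.
move=> rxy; elim: b z => [|b IH] z /=; first by rewrite addn0 => /eqP <-.
rewrite addnS /=.
case/orP=> [/IH -> //|/existsP[w /andP[/IH r a']]].
apply/orP; right; apply/existsP; exists w; by rewrite r.
Qed.

Lemma reach_sym E t x y : reach E t x y -> reach E t y x.
Proof.
elim: t x y => [|t IH] x y /=; first by rewrite eq_sym.
case/orP=> [/IH -> //|/existsP[z /andP[/IH r a]]].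
have r1' : reach E 1 y z.
  apply/orP; right; apply/existsP; exists y; rewrite /= eqxx /=.
  exact: adj_sym.
have := reach_trans r1' r; rewrite add1n; exact.
Qed.

Lemma sup_mono E F t x y : E \subset F -> sup E t x y <= sup F t x y.
Proof.
move=> sEF; apply: subset_leq_card; apply: setISS;
  apply/subsetP => w; rewrite !inE => /andP[-> /=]; exact: reach_mono.
Qed.

Definition Fmax k t E : {set {set T}} :=
  \bigcup_(F : {set {set T}} | (F \subset E) && truss_prop k t F) F.

Lemma Fmax_truss k t E F e :
  F \subset E -> truss_prop k t F -> e \in F -> in_truss k t E e.
Proof.
move=> sFE pF eF; apply/existsP; exists (Fmax k t E).
have sub : F \subset Fmax k t E by apply: (bigcup_sup F); rewrite sFE pF.
have pM : truss_prop k t (Fmax k t E).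
  apply/forall_inP => e' /bigcupP[F' /andP[sF' pF'] e'F'].
  apply/forallP => x; apply/forallP => y; apply/implyP => /andP[ee xy].
  move/forall_inP: (pF') => /(_ e' e'F') /forallP /(_ x) /forallP /(_ y).
  rewrite ee xy /= => h; apply: (leq_trans h); rewrite leq_add2r.
  apply: sup_mono; apply: (bigcup_sup F'); by rewrite sF' pF'.
rewrite (subsetP sub _ eF) andbT.
have sME : Fmax k t E \subset E by apply/bigcupsP => G /andP[].
apply/andP; split; first by apply/andP.
apply/forallP => F'; apply/implyP => /andP[/andP[s1 s2] p2].
rewrite eqEsubset s1 andbT.
apply: (bigcup_sup F'); by rewrite s2 p2.
Qed.

End Aux.

Theorem lemma6 (T : finType) (E : {set {set T}}) (tau : nat) (u v : T) :
  simple_graph E -> 1 <= tau -> odd tau -> u != v -> [set u; v] \in E ->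
  #|omega_vertices E tau u v| <= truss_number tau E [set u; v].
Proof.
move=> _ _ otau uv uvE.
set h := tau./2.
set O := omega_vertices E tau u v.
have tauE : tau = h + 1 + h.
  by rewrite -{1}(odd_double_half tau) otau -addnn add1n addn1 addSn.
set F := [set e in E | e \subset O].
have sFE : F \subset E by apply/subsetP => e; rewrite inE => /andP[].
have reachO s w : s <= h -> (reach E s u w -> w \in O) /\ (reach E s v w -> w \in O).
  by move=> le; split=> r; rewrite inE (reach_le le r) !orbT.
have uO : u \in O by rewrite inE eqxx.
have vO : v \in O by rewrite inE eqxx orbT.
have inF : forall c s w, (c = u \/ c = v) -> s <= h -> reach E s c w -> reach F s c w.
  move=> c s w cuv; elim: s w => [|s IH] w le //=.
  have le' : s <= h by apply: ltnW.
  case/orP=> [r|/existsP[z /andP[r a]]]; first by rewrite IH.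
  apply/orP; right; apply/existsP; exists z; rewrite IH //=.
  have zO : z \in O.
    by case: cuv r => -> r; [exact: (proj1 (reachO _ _ le') r) | exact: (proj2 (reachO _ _ le') r)].
  have wO : w \in O.
    have rw : reach E s.+1 c w by apply/orP; right; apply/existsP; exists z; apply/andP.
    by case: cuv rw => -> rw; [exact: (proj1 (reachO _ _ le) rw) | exact: (proj2 (reachO _ _ le) rw)].
  move: a; rewrite /adj => /andP[-> zw]; rewrite inE zw /=.
  by rewrite subUset !sub1set zO wO.
have uvF : [set u; v] \in F by rewrite inE uvE subUset !sub1set uO vO.
have ruv : reach F 1 u v.
  apply/orP; right; apply/existsP; exists u; by rewrite /= eqxx /adj uv uvF.
have rvu : reach F 1 v u by apply: reach_sym.
have fromO x : x \in O -> reach F h u x || reach F h v x.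
  rewrite inE => /orP[/orP[/orP[/eqP->|/eqP->]|r]|r].
  - by rewrite (reach_le (leq0n h)) //= eqxx.
  - by rewrite orbC (reach_le (leq0n h)) //= eqxx.
  - by rewrite (inF u h x (or_introl erefl) (leqnn h) r).
  - by rewrite (inF v h x (or_intror erefl) (leqnn h) r) orbT.
have all x w : x \in O -> w \in O -> reach F tau x w.
  move=> /fromO /orP[rx|rx] /fromO /orP[rw|rw]; move/reach_sym: rx => rx.
  - apply: (reach_le _ (reach_trans rx rw)); by rewrite tauE leq_add2r leq_addr.
  - by rewrite tauE; apply: reach_trans rw; apply: reach_trans rx ruv.
  - by rewrite tauE; apply: reach_trans rw; apply: reach_trans rx rvu.
  - apply: (reach_le _ (reach_trans rx rw)); by rewrite tauE leq_add2r leq_addr.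
have pF : truss_prop #|O| tau F.
  apply/forall_inP => e eF; apply/forallP => x; apply/forallP => y.
  apply/implyP => /andP[/eqP ee xy].
  move: eF; rewrite ee inE subUset !sub1set => /andP[_ /andP[xO yO]].
  rewrite -(cardsID [set x; y] O) addnC leq_add //.
    apply: subset_leq_card; apply/subsetP => w /setDP[wO]; rewrite !inE negb_or => /andP[wx wy].
    by rewrite wx wy !all.
  by apply: (leq_trans (subset_leq_card (subsetIr _ _))); rewrite cards2 xy.
have hin := Fmax_truss sFE pF uvF.
have lt : #|O| < #|T|.+3 by rewrite ltnS leqW // leqW // max_card.
rewrite /truss_number.
exact: (@leq_bigmax_cond _ _ (fun k : 'I_#|T|.+3 => nat_of_ord k) (Ordinal lt)).
Qed.
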